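(* Let $H_1,H_2$ be Hopf algebras over $\mathbb{C}$ forming a matched pair, with left action $\triangleright:H_2\otimes H_1\to H_1$ and right action $\triangleleft:H_2\otimes H_1\to H_2$, and let $H=H_1\bowtie H_2$ be the associated double cross product Hopf algebra. Let $H_1'$ be a Hopf algebra nondegenerately dually paired with $H_1$ by $\langle\ ,\ \rangle$, and assume that the right action $\triangleleft$ of $H_1$ on $H_2$ is dual to a left coaction $a\mapsto a_{(0)}\otimes a_{(1)}\in H_1'\otimes H_2$, i.e. $a\triangleleft h=\langle a_{(0)},h\rangle a_{(1)}$ for all $a\in H_2$, $h\in H_1$, so that the bicrossproduct Hopf algebra $H_2{\triangleright\!\!\!\blacktriangleleft} H_1'$ is defined. Consider the two algebras built on the vector space $H_1\otimes H_2\otimes H_1'$: (i) $A_1=(H_1\bowtie H_2){\triangleright\!\!\!<} H_1'$, the cross product of $H_1\bowtie H_2$ by its right action on $H_1'$ given by $\phi\triangleleft(h\otimes a)=\langle\phi_{(1)},h\rangle\,\phi_{(2)}\triangleleft a$, where $\langle\phi\triangleleft a,h\rangle=\langle\phi,a\triangleright h\rangle$; its product is $(x\otimes\phi)(y\otimes\psi)=xy_{(1)}\otimes(\phi\triangleleft y_{(2)})\psi$ for $x,y\in H_1\bowtie H_2$, $\phi,\psi\in H_1'$; (ii) $A_2=H_1{>\!\!\!\triangleleft}(H_2{\triangleright\!\!\!\blacktriangleleft} H_1')$, the cross product of $H_2{\triangleright\!\!\!\blacktriangleleft} H_1'$ by its left action on $H_1$ given by $(a\otimes\phi)\triangleright h=(a\triangleright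 h_{(1)})\langle\phi,h_{(2)}\rangle$; its product is $(h\otimes X)(g\otimes Y)=h(X_{(1)}\triangleright g)\otimes X_{(2)}Y$ for $h,g\in H_1$, $X,Y\in H_2{\triangleright\!\!\!\blacktriangleleft} H_1'$. Then the products of $A_1$ and $A_2$ on $H_1\otimes H_2\otimes H_1'$ coincide, so there is a single algebra $A=(H_1\bowtie H_2){\triangleright\!\!\!<} H_1'=H_1{>\!\!\!\triangleleft}(H_2{\triangleright\!\!\!\blacktriangleleft} H_1')$. It contains $H_1\bowtie H_2$ (as the elements $h\otimes a\otimes 1$) and $H_2{\triangleright\!\!\!\blacktriangleleft} H_1'$ (as the elements $1\otimes a\otimes\phi$) as subalgebras, and it also contains the Heisenberg–Weyl algebra $H_1{\triangleright\!\!\!<} H_1'=H_1{>\!\!\!\triangleleft} H_1'$ (the elements $h\otimes 1\otimes\phi$, with product $(h\otimes\phi)(g\otimes\psi)=hg_{(1)}\otimes\langle\phi_{(1)},g_{(2)}\rangle\phi_{(2)}\psi$).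
   Context: Sweedler notation $\Delta h=h_{(1)}\otimes h_{(2)}$ is used. A matched pair means the actions satisfy the conditions making the following a Hopf algebra: the double cross product $H_1\bowtie H_2$ is the vector space $H_1\otimes H_2$ with product $(h\otimes a)(g\otimes b)=h(a_{(1)}\triangleright g_{(1)})\otimes(a_{(2)}\triangleleft g_{(2)})b$, tensor product coproduct, and $H_1,H_2$ embedded as subalgebras $h\otimes1$, $1\otimes a$. The bicrossproduct $H_2{\triangleright\!\!\!\blacktriangleleft} H_1'$ is the vector space $H_2\otimes H_1'$ with product $(a\otimes\phi)(b\otimes\psi)=ab_{(1)}\otimes(\phi\triangleleft b_{(2)})\psi$ and coproduct $\Delta(a\otimes\phi)=(a_{(1)}\otimes a_{(2)(0)}\phi_{(1)})\otimes(a_{(2)(1)}\otimes\phi_{(2)})$, where $\phi\triangleleft b$ is the right action of $H_2$ on $H_1'$ defined by $\langle\phi\triangleleft b,h\rangle=\langle\phi,b\triangleright h\rangle$. *)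

(* Defs.v *)
(* Elements of tensor products are represented by finite lists of pure
   tensors (formal sums  sum_i u_i (x) v_i (x) ... ); two such lists denote
   the same element of the tensor product iff every multilinear form with
   values in the ground field takes the same value on them (the linear forms
   on a vector space separate its points).  Coproducts, coactions, etc. are
   given by a chosen list representation of their value. *)
From HB Require Import structures.
From mathcomp Require Import all_boot all_order all_algebra.
From mathcomp Require Import complex reals.
Set Implicit Arguments. Unset Strict Implicit. Unset Printing Implicit Defensive.
Import GRing.Theory.
Local Open Scope ring_scope.

Section HopfDefs.
Variable K : fieldType.

Definition linform (V : lmodType K) (f : V -> K) : Prop :=
  forall (c : K) (u v : V), f (c *: u + v) = c * f u + f v.

Definition linmap (U V : lmodType K) (f : U -> V) : Prop :=
  forall (c : K) (u v : U), f (c *: u + v) = c *: f u + f v.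

Definition bilinform (U V : lmodType K) (f : U -> V -> K) : Prop :=
  (forall v, linform (fun u => f u v)) /\ (forall u, linform (f u)).

Definition trilinform (U V W : lmodType K) (f : U -> V -> W -> K) : Prop :=
  [/\ forall v w, linform (fun u => f u v w),
      forall u w, linform (fun v => f u v w) &
      forall u v, linform (f u v)].

(* s, t : seq (U * V) stand for sum_i s_i.1 (x) s_i.2 in U (x) V. *)
Definition teq2 (U V : lmodType K) (s t : seq (U * V)) : Prop :=
  forall f : U -> V -> K, bilinform f ->
    \sum_(p <- s) f p.1 p.2 = \sum_(p <- t) f p.1 p.2.

(* triples ((u, v), w) stand for u (x) v (x) w in U (x) V (x) W. *)
Definition teq3 (U V W : lmodType K) (s t : seq (U * V * W)) : Prop :=
  forall f : U -> V -> W -> K, trilinform f ->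
    \sum_(p <- s) f p.1.1 p.1.2 p.2 = \sum_(p <- t) f p.1.1 p.1.2 p.2.

Definition tscale (U V : lmodType K) (c : K) (s : seq (U * V)) :=
  [seq (c *: p.1, p.2) | p <- s].

Record hopf_data (H : Type) := HopfData {
  cop : H -> seq (H * H);
  cou : H -> K;
  antip : H -> H }.

Record is_hopf (H : algType K) (D : hopf_data H) : Prop := IsHopf {
  cop_lin : forall c x y,
      teq2 (cop D (c *: x + y)) (tscale c (cop D x) ++ cop D y);
  cou_lin : linform (cou D);
  antip_lin : linmap (antip D);
  coassoc : forall x,
      teq3 [seq (p.1, q.1, q.2) | p <- cop D x, q <- cop D p.2]
           [seq (q.1, q.2, p.2) | p <- cop D x, q <- cop D p.1];
  counitl : forall x, \sum_(p <- cop D x) cou D p.1 *: p.2 = x;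
  counitr : forall x, \sum_(p <- cop D x) cou D p.2 *: p.1 = x;
  cop_mul : forall x y,
      teq2 (cop D (x * y)) [seq (p.1 * q.1, p.2 * q.2) | p <- cop D x, q <- cop D y];
  cop_one : teq2 (cop D 1) [:: (1, 1)];
  cou_mul : forall x y, cou D (x * y) = cou D x * cou D y;
  cou_one : cou D 1 = 1;
  antipl : forall x, \sum_(p <- cop D x) antip D p.1 * p.2 = cou D x *: 1;
  antipr : forall x, \sum_(p <- cop D x) p.1 * antip D p.2 = cou D x *: 1 }.

Section MatchedPair.
Variables (H1 H2 : algType K) (D1 : hopf_data H1) (D2 : hopf_data H2).
Variables (lt : H2 -> H1 -> H1) (rt : H2 -> H1 -> H2).

Record matched_pair : Prop := MatchedPair {
  lt_linl : forall h, linmap (fun a => lt a h);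
  lt_linr : forall a, linmap (lt a);
  lt_mul : forall a b h, lt (a * b) h = lt a (lt b h);
  lt_one : forall h, lt 1 h = h;
  lt_cop : forall a h, teq2 (cop D1 (lt a h))
             [seq (lt p.1 q.1, lt p.2 q.2) | p <- cop D2 a, q <- cop D1 h];
  lt_cou : forall a h, cou D1 (lt a h) = cou D2 a * cou D1 h;
  rt_linl : forall h, linmap (fun a => rt a h);
  rt_linr : forall a, linmap (rt a);
  rt_mul : forall a g h, rt a (g * h) = rt (rt a g) h;
  rt_one : forall a, rt a 1 = a;
  rt_cop : forall a h, teq2 (cop D2 (rt a h))
             [seq (rt p.1 q.1, rt p.2 q.2) | p <- cop D2 a, q <- cop D1 h];
  rt_cou : forall a h, cou D2 (rt a h) = cou D2 a * cou D1 h;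
  mp_lt_mul : forall a g h,
      lt a (g * h) = \sum_(p <- cop D2 a) \sum_(q <- cop D1 g)
                       lt p.1 q.1 * lt (rt p.2 q.2) h;
  mp_lt_one : forall a, lt a 1 = cou D2 a *: 1;
  mp_rt_mul : forall a b g,
      rt (a * b) g = \sum_(p <- cop D2 b) \sum_(q <- cop D1 g)
                       rt a (lt p.1 q.1) * rt p.2 q.2;
  mp_rt_one : forall g, rt 1 g = cou D1 g *: 1;
  mp_cocomm : forall a g,
      teq2 [seq (rt p.1 q.1, lt p.2 q.2) | p <- cop D2 a, q <- cop D1 g]
           [seq (rt p.2 q.2, lt p.1 q.1) | p <- cop D2 a, q <- cop D1 g] }.

Definition dcp_mul (x y : H1 * H2) : seq (H1 * H2) :=
  [seq (x.1 * lt p.1 q.1, rt p.2 q.2 * y.2) | p <- cop D2 x.2, q <- cop D1 y.1].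

Definition dcp_cop (x : H1 * H2) : seq ((H1 * H2) * (H1 * H2)) :=
  [seq ((p.1, q.1), (p.2, q.2)) | p <- cop D1 x.1, q <- cop D2 x.2].
End MatchedPair.

Section Pairing.
Variables (H1 H1' : algType K) (D1 : hopf_data H1) (D1' : hopf_data H1').
Variable pr : H1' -> H1 -> K.

Record hopf_pairing : Prop := HopfPairing {
  pr_bilin : bilinform pr;
  pr_mull : forall phi psi h,
      pr (phi * psi) h = \sum_(p <- cop D1 h) pr phi p.1 * pr psi p.2;
  pr_onel : forall h, pr 1 h = cou D1 h;
  pr_mulr : forall phi g h,
      pr phi (g * h) = \sum_(p <- cop D1' phi) pr p.1 g * pr p.2 h;
  pr_oner : forall phi, pr phi 1 = cou D1' phi;
  pr_antip : forall phi h, pr (antip D1' phi) h = pr phi (antip D1 h) }.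

Definition nondeg_pairing : Prop :=
  (forall phi, (forall h, pr phi h = 0) -> phi = 0) /\
  (forall h, (forall phi, pr phi h = 0) -> h = 0).
End Pairing.

Section Coaction.
Variables (H1' H2 : algType K) (D1' : hopf_data H1').
Variable beta : H2 -> seq (H1' * H2).

Record left_coaction : Prop := LeftCoaction {
  beta_lin : forall c a b, teq2 (beta (c *: a + b)) (tscale c (beta a) ++ beta b);
  beta_coassoc : forall a,
      teq3 [seq (p.1, q.1, q.2) | p <- beta a, q <- beta p.2]
           [seq (q.1, q.2, p.2) | p <- beta a, q <- cop D1' p.1];
  beta_counit : forall a, \sum_(p <- beta a) cou D1' p.1 *: p.2 = a }.
End Coaction.

Section Constructions.
Variables (H1 H2 H1' : algType K).
Variables (D1 : hopf_data H1) (D2 : hopf_data H2) (D1' : hopf_data H1').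
Variables (lt : H2 -> H1 -> H1) (rt : H2 -> H1 -> H2).
Variable pr : H1' -> H1 -> K.
Variable beta : H2 -> seq (H1' * H2).
(* ractp phi a = phi <| a, with <phi <| a, h> = <phi, a |> h> *)
Variable ractp : H1' -> H2 -> H1'.

Definition dcp_ract (phi : H1') (x : H1 * H2) : H1' :=
  \sum_(p <- cop D1' phi) pr p.1 x.1 *: ractp p.2 x.2.

Definition A1_mul (X Y : H1 * H2 * H1') : seq (H1 * H2 * H1') :=
  flatten [seq [seq (z.1, z.2, dcp_ract X.2 q.2 * Y.2)
               | z <- dcp_mul D1 D2 lt rt X.1 q.1]
          | q <- dcp_cop D1 D2 Y.1].

Definition bc_mul (X Y : H2 * H1') : seq (H2 * H1') :=
  [seq (X.1 * p.1, ractp X.2 p.2 * Y.2) | p <- cop D2 Y.1].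

Definition bc_cop (X : H2 * H1') : seq ((H2 * H1') * (H2 * H1')) :=
  flatten [seq flatten [seq [seq ((p.1, q.1 * r.1), (q.2, r.2)) | r <- cop D1' X.2]
                       | q <- beta p.2]
          | p <- cop D2 X.1].

Definition bc_act (X : H2 * H1') (h : H1) : H1 :=
  \sum_(p <- cop D1 h) pr X.2 p.2 *: lt X.1 p.1.

Definition A2_mul (X Y : H1 * H2 * H1') : seq (H1 * H2 * H1') :=
  flatten [seq [seq (X.1.1 * bc_act q.1 Y.1.1, z.1, z.2)
               | z <- bc_mul q.2 (Y.1.2, Y.2)]
          | q <- bc_cop (X.1.2, X.2)].

Definition A_mulL (s t : seq (H1 * H2 * H1')) : seq (H1 * H2 * H1') :=
  flatten [seq A1_mul x y | x <- s, y <- t].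

Definition hw_mul (x y : H1 * H1') : seq (H1 * H1') :=
  [seq (x.1 * p.1, pr q.1 p.2 *: (q.2 * y.2)) | p <- cop D1 y.1, q <- cop D1' x.2].

Definition iota_dcp (x : H1 * H2) : H1 * H2 * H1' := (x.1, x.2, 1).
Definition iota_bc (X : H2 * H1') : H1 * H2 * H1' := (1, X.1, X.2).
Definition iota_hw (x : H1 * H1') : H1 * H2 * H1' := (x.1, 1, x.2).
End Constructions.

End HopfDefs.

Arguments iota_dcp {K H1 H2 H1'} x.
Arguments iota_bc {K H1 H2 H1'} X.
Arguments iota_hw {K H1 H2 H1'} x.

(* Main.v *)
Require Import Defs.
From HB Require Import structures.
From mathcomp Require Import all_boot all_order all_algebra.
From mathcomp Require Import complex reals.
From mathcomp Require Import ring.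
Set Implicit Arguments. Unset Strict Implicit. Unset Printing Implicit Defensive.
Import GRing.Theory.
Local Open Scope ring_scope.

Section Lin.
Variable K : fieldType.

Section LinBasics.
Variables (U V W X : lmodType K).

Lemma lf0 (f : V -> K) : linform f -> f 0 = 0.
Proof. move=> hf; have := hf 1 0 0; rewrite scaler0 addr0 mul1r => h.
by apply: (addrI (f 0)); rewrite addr0 -h. Qed.

Lemma lfD (f : V -> K) u v : linform f -> f (u + v) = f u + f v.
Proof. by move=> hf; have := hf 1 u v; rewrite scale1r mul1r. Qed.

Lemma lfZ (f : V -> K) c u : linform f -> f (c *: u) = c * f u.
Proof. by move=> hf; rewrite -(addr0 (c *: u)) hf lf0 // addr0. Qed.

Lemma lf_sumE (f : V -> K) I (s : seq I) (F : I -> V) : linform f ->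
  f (\sum_(i <- s) F i) = \sum_(i <- s) f (F i).
Proof.
move=> hf; elim: s => [|a s IH]; first by rewrite !big_nil lf0.
by rewrite !big_cons lfD // IH.
Qed.

Lemma lm0 (L : U -> V) : linmap L -> L 0 = 0.
Proof. move=> hf; have := hf 1 0 0; rewrite scaler0 addr0 scale1r => h.
by apply: (addrI (L 0)); rewrite addr0 -h. Qed.

Lemma lmD (L : U -> V) u v : linmap L -> L (u + v) = L u + L v.
Proof. by move=> hf; have := hf 1 u v; rewrite !scale1r. Qed.

Lemma lmZ (L : U -> V) c u : linmap L -> L (c *: u) = c *: L u.
Proof. by move=> hf; rewrite -(addr0 (c *: u)) hf lm0 // addr0. Qed.

Lemma lm_sumE (L : U -> V) I (s : seq I) (F : I -> U) : linmap L ->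
  L (\sum_(i <- s) F i) = \sum_(i <- s) L (F i).
Proof.
move=> hf; elim: s => [|a s IH]; first by rewrite !big_nil lm0.
by rewrite !big_cons lmD // IH.
Qed.

Lemma lf_comp (f : V -> K) (L : U -> V) : linform f -> linmap L ->
  linform (fun u => f (L u)).
Proof. by move=> hf hL c u v; rewrite hL hf. Qed.

Lemma lf_sum I (s : seq I) (F : I -> V -> K) :
  (forall i, linform (F i)) -> linform (fun u => \sum_(i <- s) F i u).
Proof.
move=> hF c u v; rewrite mulr_sumr -big_split /=.
by apply: eq_bigr => i _; rewrite hF.
Qed.

Lemma lf_mulr (g : V -> K) c : linform g -> linform (fun u => g u * c).
Proof. by move=> hg a u v; rewrite hg mulrDl mulrA. Qed.

Lemma lf_mull (g : V -> K) c : linform g -> linform (fun u => c * g u).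
Proof. by move=> hg a u v; rewrite hg mulrDr mulrCA. Qed.

Lemma lf_add (g h : V -> K) : linform g -> linform h -> linform (fun u => g u + h u).
Proof. by move=> hg hh a u v; rewrite hg hh mulrDr addrACA. Qed.

Lemma lm_id : linmap (fun u : V => u).
Proof. by []. Qed.

Lemma lm_scale (L : U -> V) c : linmap L -> linmap (fun u => c *: L u).
Proof. by move=> hL a u v; rewrite hL scalerDr !scalerA mulrC. Qed.

Lemma lm_scale2 (g : U -> K) (v : V) : linform g -> linmap (fun u => g u *: v).
Proof. by move=> hg a u w; rewrite hg scalerDl scalerA. Qed.

Lemma lm_sum I (s : seq I) (F : I -> U -> V) :
  (forall i, linmap (F i)) -> linmap (fun u => \sum_(i <- s) F i u).
Proof.
move=> hF c u v; rewrite scaler_sumr -big_split /=.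
by apply: eq_bigr => i _; rewrite hF.
Qed.

Lemma lm_add (L L' : U -> V) : linmap L -> linmap L' -> linmap (fun u => L u + L' u).
Proof. by move=> h h' a u v; rewrite h h' scalerDr addrACA. Qed.

Lemma bl1 (f : V -> W -> K) (L : U -> V) w : bilinform f -> linmap L ->
  linform (fun u => f (L u) w).
Proof. by case=> h1 _ hL; apply: (lf_comp (h1 w)). Qed.
Lemma bl2 (f : V -> W -> K) (L : U -> W) v : bilinform f -> linmap L ->
  linform (fun u => f v (L u)).
Proof. by case=> _ h2 hL c x y; rewrite hL h2. Qed.

Lemma tl1 (f : V -> W -> X -> K) (L : U -> V) w x : trilinform f -> linmap L ->
  linform (fun u => f (L u) w x).
Proof. by case=> h1 _ _ hL; apply: (lf_comp (h1 w x)). Qed.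
Lemma tl2 (f : V -> W -> X -> K) (L : U -> W) v x : trilinform f -> linmap L ->
  linform (fun u => f v (L u) x).
Proof. by case=> _ h1 _ hL c y z; rewrite hL h1. Qed.
Lemma tl3 (f : V -> W -> X -> K) (L : U -> X) v w : trilinform f -> linmap L ->
  linform (fun u => f v w (L u)).
Proof. by case=> _ _ h1 hL c y z; rewrite hL h1. Qed.

Lemma teq2P (s t : seq (V * W)) : teq2 s t ->
  forall G : V * W -> K, bilinform (fun a b => G (a, b)) ->
  \sum_(p <- s) G p = \sum_(p <- t) G p.
Proof.
move=> h G hG; have := h _ hG.
have E r : \sum_(p <- r) G (p.1, p.2) = \sum_(p <- r) G p.
  by apply: eq_bigr => -[].
by rewrite !E.
Qed.

Lemma teq3P (s t : seq (V * W * X)) : teq3 s t ->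
  forall G : V * W * X -> K, trilinform (fun a b c => G (a, b, c)) ->
  \sum_(p <- s) G p = \sum_(p <- t) G p.
Proof.
move=> h G hG; have := h _ hG.
have E r : \sum_(p <- r) G (p.1.1, p.1.2, p.2) = \sum_(p <- r) G p.
  by apply: eq_bigr => -[[]].
by rewrite !E.
Qed.

Lemma teq3_refl (s : seq (V * W * X)) : teq3 s s.
Proof. by []. Qed.

End LinBasics.
End Lin.

Section HopfGen.
Variable K : fieldType.
Variable H : algType K.
Variable D : hopf_data K H.
Hypothesis hD : is_hopf D.

Lemma lf_cop0 (G : H * H -> K) : bilinform (fun a b => G (a, b)) ->
  linform (fun x => \sum_(p <- cop D x) G p).
Proof.
move=> hG c x y; rewrite (teq2P (cop_lin hD c x y) hG) big_cat /= big_map.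
congr (_ + _); rewrite mulr_sumr; apply: eq_bigr => -[a b] _ /=.
by case: hG => h1 _; apply: (lfZ c a (h1 b)).
Qed.

Lemma lf_cop (U : lmodType K) (L : U -> H) (G : H * H -> K) :
  linmap L -> bilinform (fun a b => G (a, b)) ->
  linform (fun u => \sum_(p <- cop D (L u)) G p).
Proof. by move=> hL hG; apply: (lf_comp (lf_cop0 hG) hL). Qed.

Lemma lf_cou (U : lmodType K) (L : U -> H) : linmap L -> linform (fun u => cou D (L u)).
Proof. by move=> hL; apply: (lf_comp (cou_lin hD) hL). Qed.

Lemma lm_mulr (U : lmodType K) (L : U -> H) w : linmap L -> linmap (fun u => L u * w).
Proof. by move=> hL c u v; rewrite hL mulrDl scalerAl. Qed.

Lemma lm_mull (U : lmodType K) (L : U -> H) w : linmap L -> linmap (fun u => w * L u).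
Proof. by move=> hL c u v; rewrite hL mulrDr scalerAr. Qed.

Lemma coasE x (F : H * H -> H * H -> K) :
  (forall p q, F p q = F (p.1, 0) q) -> trilinform (fun a b c => F (a, 0) (b, c)) ->
  \sum_(p <- cop D x) \sum_(q <- cop D p.2) F p q =
  \sum_(p <- cop D x) \sum_(q <- cop D p.1) F (q.1, 0) (q.2, p.2).
Proof.
move=> hF hG.
have := teq3P (coassoc hD x) (G := fun t => F (t.1.1, 0) (t.1.2, t.2)) hG.
rewrite !big_allpairs_dep /= => E.
transitivity (\sum_(p <- cop D x) \sum_(q <- cop D p.2) F (p.1, 0) (q.1, q.2)).
  by apply: eq_bigr => p _; apply: eq_bigr => -[a b] _; rewrite hF.
by rewrite E.
Qed.

Lemma coasE' x (F : H * H -> H * H -> K) :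
  (forall q p, F q p = F q (0, p.2)) -> trilinform (fun a b c => F (a, b) (0, c)) ->
  \sum_(p <- cop D x) \sum_(q <- cop D p.1) F q p =
  \sum_(p <- cop D x) \sum_(q <- cop D p.2) F (p.1, q.1) (0, q.2).
Proof.
move=> hF hG.
have := teq3P (coassoc hD x) (G := fun t => F (t.1.1, t.1.2) (0, t.2)) hG.
rewrite !big_allpairs_dep /= => E.
transitivity (\sum_(p <- cop D x) \sum_(q <- cop D p.1) F (q.1, q.2) (0, p.2)).
  by apply: eq_bigr => p _; apply: eq_bigr => -[a b] _; rewrite hF.
by rewrite -E.
Qed.

Lemma counitlE x : \sum_(p <- cop D x) cou D p.1 *: p.2 = x.
Proof. exact: counitl hD x. Qed.
Lemma counitrE x : \sum_(p <- cop D x) cou D p.2 *: p.1 = x.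
Proof. exact: counitr hD x. Qed.

End HopfGen.

Section Main.
Variable K : fieldType.
Variables (H1 H2 H1' : algType K).
Variables (D1 : hopf_data K H1) (D2 : hopf_data K H2) (D1' : hopf_data K H1').
Hypotheses (hopf1 : is_hopf D1) (hopf2 : is_hopf D2) (hopf1' : is_hopf D1').
Variables (lt : H2 -> H1 -> H1) (rt : H2 -> H1 -> H2).
Hypothesis mp : matched_pair D1 D2 lt rt.
Variable pr : H1' -> H1 -> K.
Hypotheses (hpr : hopf_pairing D1 D1' pr) (ndeg : nondeg_pairing pr).
Variable beta : H2 -> seq (H1' * H2).
Hypothesis hbeta : left_coaction D1' beta.
Hypothesis hdual : forall a h, rt a h = \sum_(p <- beta a) pr p.1 h *: p.2.
Variable ractp : H1' -> H2 -> H1'.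
Hypothesis hractp : forall phi a h, pr (ractp phi a) h = pr phi (lt a h).

Lemma lf_pr1 (U : lmodType K) (L : U -> H1') h : linmap L -> linform (fun u => pr (L u) h).
Proof. by move=> hL; apply: (bl1 _ (pr_bilin hpr) hL). Qed.
Lemma lf_pr2 (U : lmodType K) (L : U -> H1) phi : linmap L -> linform (fun u => pr phi (L u)).
Proof. by move=> hL; apply: (bl2 _ (pr_bilin hpr) hL). Qed.

Lemma prD1 x y h : pr (x + y) h = pr x h + pr y h.
Proof. by apply: (lfD _ _ ((pr_bilin hpr).1 h)). Qed.
Lemma prZ1 c x h : pr (c *: x) h = c * pr x h.
Proof. by apply: (lfZ _ _ ((pr_bilin hpr).1 h)). Qed.
Lemma prsum1 I (s : seq I) F h : pr (\sum_(i <- s) F i) h = \sum_(i <- s) pr (F i) h.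
Proof. by apply: (lf_sumE _ _ ((pr_bilin hpr).1 h)). Qed.
Lemma prD2 x y phi : pr phi (x + y) = pr phi x + pr phi y.
Proof. by apply: (lfD _ _ ((pr_bilin hpr).2 phi)). Qed.
Lemma prZ2 c x phi : pr phi (c *: x) = c * pr phi x.
Proof. by apply: (lfZ _ _ ((pr_bilin hpr).2 phi)). Qed.
Lemma prsum2 I (s : seq I) F phi : pr phi (\sum_(i <- s) F i) = \sum_(i <- s) pr phi (F i).
Proof. by apply: (lf_sumE _ _ ((pr_bilin hpr).2 phi)). Qed.

Lemma sep x y : (forall g, pr x g = pr y g) -> x = y.
Proof.
move=> h; apply/eqP; rewrite -subr_eq0; apply/eqP; apply: (ndeg.1) => g.
by rewrite -scaleN1r prD1 prZ1 h mulN1r addrN.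
Qed.

Lemma lm_lt1 (U : lmodType K) (L : U -> H2) h : linmap L -> linmap (fun u => lt (L u) h).
Proof. by move=> hL c u v; rewrite hL (lt_linl mp). Qed.
Lemma lm_lt2 (U : lmodType K) (L : U -> H1) a : linmap L -> linmap (fun u => lt a (L u)).
Proof. by move=> hL c u v; rewrite hL (lt_linr mp). Qed.
Lemma lm_rt1 (U : lmodType K) (L : U -> H2) h : linmap L -> linmap (fun u => rt (L u) h).
Proof. by move=> hL c u v; rewrite hL (rt_linl mp). Qed.
Lemma lm_rt2 (U : lmodType K) (L : U -> H1) a : linmap L -> linmap (fun u => rt a (L u)).
Proof. by move=> hL c u v; rewrite hL (rt_linr mp). Qed.

Lemma lm_rp1 (U : lmodType K) (L : U -> H1') a : linmap L -> linmap (fun u => ractp (L u) a).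
Proof.
move=> hL c u v; apply: sep => g; by rewrite hractp hL prD1 prZ1 prD1 prZ1 !hractp.
Qed.
Lemma lm_rp2 (U : lmodType K) (L : U -> H2) phi : linmap L -> linmap (fun u => ractp phi (L u)).
Proof.
move=> hL c u v; apply: sep => g; by rewrite hractp hL prD1 prZ1 !hractp (lt_linl mp) prD2 prZ2.
Qed.

Lemma pr_act th (x : H1 * H2) g :
  pr (dcp_ract D1' pr ractp th x) g = pr th (x.1 * lt x.2 g).
Proof.
rewrite /dcp_ract prsum1 (pr_mulr hpr); apply: eq_bigr => p _.
by rewrite prZ1 hractp.
Qed.

Lemma lm_act1 (U : lmodType K) (L : U -> H1') x :
  linmap L -> linmap (fun u => dcp_ract D1' pr ractp (L u) x).
Proof.
move=> hL c u v; apply: sep => g; by rewrite pr_act hL prD1 prZ1 prD1 prZ1 !pr_act.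
Qed.
Lemma lm_act2 (U : lmodType K) (L : U -> H1) th a :
  linmap L -> linmap (fun u => dcp_ract D1' pr ractp th (L u, a)).
Proof.
move=> hL c u v; apply: sep => g; rewrite pr_act prD1 prZ1 !pr_act /= hL mulrDl.
by rewrite prD2 -scalerAl prZ2.
Qed.
Lemma lm_act3 (U : lmodType K) (L : U -> H2) th h :
  linmap L -> linmap (fun u => dcp_ract D1' pr ractp th (h, L u)).
Proof.
move=> hL c u v; apply: sep => g; rewrite pr_act prD1 prZ1 !pr_act /= hL (lt_linl mp).
by rewrite mulrDr prD2 -scalerAr prZ2.
Qed.


Arguments linform : simpl never.
Arguments linmap : simpl never.

Ltac not_lam t := lazymatch t with | fun _ => _ => fail | _ => idtac end.

Ltac lin_ext := fail.

Ltac lin :=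
  match goal with
  | H : linmap ?L |- linmap ?L => exact H
  | H : linmap ?L |- linmap (fun u => ?L u) => exact H
  | H : linform ?L |- linform ?L => exact H
  | H : linform ?L |- linform (fun u => ?L u) => exact H
  | |- linmap ?L => not_lam L; change (linmap (fun u => L u)); lin
  | |- linform ?L => not_lam L; change (linform (fun u => L u)); lin
  | |- trilinform _ => split => ? ? /=; lin
  | |- bilinform _ => split => ? /=; lin
  | |- forall _, _ => move=> ? /=; lin
  | |- linform (fun u => \sum_(i <- ?s) @?F u i) => apply: (lf_sum s); lin
  | |- linform (fun u => \sum_(i <- cop ?D (@?L u)) @?G i) =>
      first [ apply: (lf_cop hopf1) | apply: (lf_cop hopf2)
            | apply: (lf_cop hopf1') ]; lin
  | |- linform (fun u => @?g u * ?c) => apply: lf_mulr; lin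
  | |- linform (fun u => ?c * @?g u) => apply: lf_mull; lin
  | |- linform (fun u => @?g u + @?h u) => apply: lf_add; lin
  | |- linform (fun u => pr (@?L u) ?h) => apply: lf_pr1; lin
  | |- linform (fun u => pr ?phi (@?L u)) => apply: lf_pr2; lin
  | |- linform (fun u => cou ?D (@?L u)) =>
      first [ apply: (lf_cou hopf1) | apply: (lf_cou hopf2)
            | apply: (lf_cou hopf1') ]; lin
  | H : trilinform ?f |- linform (fun u => ?f (@?L u) ?y ?z) => apply: (tl1 y z H); lin
  | H : trilinform ?f |- linform (fun u => ?f ?x (@?L u) ?z) => apply: (tl2 x z H); lin
  | H : trilinform ?f |- linform (fun u => ?f ?x ?y (@?L u)) => apply: (tl3 x y H); lin
  | H : bilinform ?f |- linform (fun u => ?f (@?L u) ?y) => apply: (bl1 y H); lin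
  | H : bilinform ?f |- linform (fun u => ?f ?x (@?L u)) => apply: (bl2 x H); lin
  | H : linform ?f |- linform (fun u => ?f (@?L u)) => apply: (lf_comp H); lin
  | |- linmap (fun u => u) => exact: lm_id
  | |- linmap (fun u => \sum_(i <- ?s) @?F u i) => apply: (lm_sum s); lin
  | |- linmap (fun u => @?L u * ?w) => apply: lm_mulr; lin
  | |- linmap (fun u => ?w * @?L u) => apply: lm_mull; lin
  | |- linmap (fun u => ?c *: @?L u) => apply: lm_scale; lin
  | |- linmap (fun u => @?g u *: ?v) => apply: lm_scale2; lin
  | |- linmap (fun u => @?L u + @?L' u) => apply: lm_add; lin
  | |- linmap (fun u => lt (@?L u) ?h) => apply: lm_lt1; lin
  | |- linmap (fun u => lt ?a (@?L u)) => apply: lm_lt2; lin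
  | |- linmap (fun u => rt (@?L u) ?h) => apply: lm_rt1; lin
  | |- linmap (fun u => rt ?a (@?L u)) => apply: lm_rt2; lin
  | |- linmap (fun u => ractp (@?L u) ?a) => apply: lm_rp1; lin
  | |- linmap (fun u => ractp ?a (@?L u)) => apply: lm_rp2; lin
  | |- linmap (fun u => dcp_ract D1' pr ractp (@?L u) ?x) => apply: lm_act1; lin
  | |- linmap (fun u => dcp_ract D1' pr ractp ?th (@?L u, ?a)) => apply: lm_act2; lin
  | |- linmap (fun u => dcp_ract D1' pr ractp ?th (?h, @?L u)) => apply: lm_act3; lin
  | H : bilinform (fun c d => ?G (c, d)) |- linform (fun u => ?G (@?L u, ?y)) =>
      apply: (bl1 y H); lin
  | H : bilinform (fun c d => ?G (c, d)) |- linform (fun u => ?G (?x, @?L u)) =>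
      apply: (bl2 x H); lin
  | |- _ => lin_ext
  | |- ?g => idtac "LINFAIL:" g; fail
  end.


Local Notation M := (dcp_mul D1 D2 lt rt).
Local Notation C := (dcp_cop D1 D2).
Local Notation act := (dcp_ract D1' pr ractp).

Lemma bigM (V : zmodType) (x y : H1 * H2) (F : H1 * H2 -> V) :
  \sum_(w <- M x y) F w =
  \sum_(p <- cop D2 x.2) \sum_(q <- cop D1 y.1) F (x.1 * lt p.1 q.1, rt p.2 q.2 * y.2).
Proof. by rewrite /dcp_mul big_allpairs_dep. Qed.

Lemma bigC (V : zmodType) (x : H1 * H2) (F : (H1 * H2) * (H1 * H2) -> V) :
  \sum_(q <- C x) F q =
  \sum_(p <- cop D1 x.1) \sum_(r <- cop D2 x.2) F ((p.1, r.1), (p.2, r.2)).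
Proof. by rewrite /dcp_cop big_allpairs_dep. Qed.

Definition qlin (G : (H1 * H2) * (H1 * H2) -> K) :=
  [/\ forall b c d, linform (fun a => G ((a, b), (c, d))),
      forall a c d, linform (fun b => G ((a, b), (c, d))),
      forall a b d, linform (fun c => G ((a, b), (c, d))) &
      forall a b c, linform (fun d => G ((a, b), (c, d)))].

Lemma lf_ext (U : lmodType K) (f g : U -> K) : (forall u, f u = g u) -> linform g -> linform f.
Proof. by move=> e hg c u v; rewrite !e. Qed.

Lemma ql1 (U : lmodType K) G (L : U -> H1) b c d : qlin G -> linmap L ->
  linform (fun u => G ((L u, b), (c, d))).
Proof. by case=> h _ _ _ hL; apply: (lf_comp (h b c d) hL). Qed.
Lemma ql2 (U : lmodType K) G (L : U -> H2) a c d : qlin G -> linmap L ->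
  linform (fun u => G ((a, L u), (c, d))).
Proof. by case=> _ h _ _ hL; apply: (lf_comp (h a c d) hL). Qed.
Lemma ql3 (U : lmodType K) G (L : U -> H1) a b d : qlin G -> linmap L ->
  linform (fun u => G ((a, b), (L u, d))).
Proof. by case=> _ _ h _ hL; apply: (lf_comp (h a b d) hL). Qed.
Lemma ql4 (U : lmodType K) G (L : U -> H2) a b c : qlin G -> linmap L ->
  linform (fun u => G ((a, b), (c, L u))).
Proof. by case=> _ _ _ h hL; apply: (lf_comp (h a b c) hL). Qed.

Ltac lin_ext ::=
  match goal with
  | |- qlin _ => rewrite /qlin; split; lin
  | H : qlin ?G |- linform (fun u => ?G ((@?L u, ?b), (?c, ?d))) => apply: (ql1 b c d H); lin
  | H : qlin ?G |- linform (fun u => ?G ((?a, @?L u), (?c, ?d))) => apply: (ql2 a c d H); lin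
  | H : qlin ?G |- linform (fun u => ?G ((?a, ?b), (@?L u, ?d))) => apply: (ql3 a b d H); lin
  | H : qlin ?G |- linform (fun u => ?G ((?a, ?b), (?c, @?L u))) => apply: (ql4 a b c H); lin
  end.

Lemma lf_M1 (U : lmodType K) (L : U -> H1) a y (G : H1 * H2 -> K) :
  linmap L -> bilinform (fun c d => G (c, d)) ->
  linform (fun u => \sum_(w <- M (L u, a) y) G w).
Proof. move=> hL hG; eapply lf_ext; [move=> u; rewrite bigM /=; reflexivity | lin]. Qed.
Lemma lf_M2 (U : lmodType K) (L : U -> H2) h y (G : H1 * H2 -> K) :
  linmap L -> bilinform (fun c d => G (c, d)) ->
  linform (fun u => \sum_(w <- M (h, L u) y) G w).
Proof. move=> hL hG; eapply lf_ext; [move=> u; rewrite bigM /=; reflexivity | lin]. Qed.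
Lemma lf_M3 (U : lmodType K) (L : U -> H1) x b (G : H1 * H2 -> K) :
  linmap L -> bilinform (fun c d => G (c, d)) ->
  linform (fun u => \sum_(w <- M x (L u, b)) G w).
Proof. move=> hL hG; eapply lf_ext; [move=> u; rewrite bigM /=; reflexivity | lin]. Qed.
Lemma lf_M4 (U : lmodType K) (L : U -> H2) x g (G : H1 * H2 -> K) :
  linmap L -> bilinform (fun c d => G (c, d)) ->
  linform (fun u => \sum_(w <- M x (g, L u)) G w).
Proof. move=> hL hG; eapply lf_ext; [move=> u; rewrite bigM /=; reflexivity | lin]. Qed.
Lemma lf_C1 (U : lmodType K) (L : U -> H1) a (G : (H1 * H2) * (H1 * H2) -> K) :
  linmap L -> qlin G -> linform (fun u => \sum_(q <- C (L u, a)) G q).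
Proof. move=> hL hG; eapply lf_ext; [move=> u; rewrite bigC /=; reflexivity | lin]. Qed.
Lemma lf_C2 (U : lmodType K) (L : U -> H2) h (G : (H1 * H2) * (H1 * H2) -> K) :
  linmap L -> qlin G -> linform (fun u => \sum_(q <- C (h, L u)) G q).
Proof. move=> hL hG; eapply lf_ext; [move=> u; rewrite bigC /=; reflexivity | lin]. Qed.

Ltac lin_ext ::=
  match goal with
  | |- qlin _ => rewrite /qlin; split; lin
  | H : qlin ?G |- linform (fun u => ?G ((@?L u, ?b), (?c, ?d))) => apply: (ql1 b c d H); lin
  | H : qlin ?G |- linform (fun u => ?G ((?a, @?L u), (?c, ?d))) => apply: (ql2 a c d H); lin
  | H : qlin ?G |- linform (fun u => ?G ((?a, ?b), (@?L u, ?d))) => apply: (ql3 a b d H); lin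
  | H : qlin ?G |- linform (fun u => ?G ((?a, ?b), (?c, @?L u))) => apply: (ql4 a b c H); lin
  | |- linform (fun u => \sum_(w <- dcp_mul D1 D2 lt rt (@?L u, ?a) ?y) @?G w) => apply: lf_M1; lin
  | |- linform (fun u => \sum_(w <- dcp_mul D1 D2 lt rt (?h, @?L u) ?y) @?G w) => apply: lf_M2; lin
  | |- linform (fun u => \sum_(w <- dcp_mul D1 D2 lt rt ?x (@?L u, ?b)) @?G w) => apply: lf_M3; lin
  | |- linform (fun u => \sum_(w <- dcp_mul D1 D2 lt rt ?x (?g, @?L u)) @?G w) => apply: lf_M4; lin
  | |- linform (fun u => \sum_(w <- dcp_cop D1 D2 (@?L u, ?a)) @?G w) => apply: lf_C1; lin
  | |- linform (fun u => \sum_(w <- dcp_cop D1 D2 (?h, @?L u)) @?G w) => apply: lf_C2; lin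
  end.

Lemma actM_key (x y : H1 * H2) g :
  \sum_(m <- M x y) m.1 * lt m.2 g = x.1 * lt x.2 (y.1 * lt y.2 g).
Proof.
rewrite bigM /= (mp_lt_mul mp) mulr_sumr; apply: eq_bigr => p _.
rewrite mulr_sumr; apply: eq_bigr => q _.
by rewrite (lt_mul mp) mulrA.
Qed.

Lemma act_comp phi (x y : H1 * H2) :
  act (act phi x) y = \sum_(m <- M x y) act phi m.
Proof.
apply: sep => g; rewrite !pr_act prsum1.
under eq_bigr => m _ do rewrite pr_act.
by rewrite -prsum2 actM_key.
Qed.

Lemma act_mul th chi (x : H1 * H2) :
  act (th * chi) x = \sum_(s <- C x) act th s.1 * act chi s.2.
Proof.
apply: sep => g; rewrite pr_act (pr_mull hpr) prsum1.
rewrite (teq2P (cop_mul hopf1 _ _) (G := fun t => pr th t.1 * pr chi t.2)); last by lin.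
rewrite big_allpairs_dep /= bigC /=; apply: eq_bigr => p _.
rewrite (teq2P (lt_cop mp _ _) (G := fun t => pr th (p.1 * t.1) * pr chi (p.2 * t.2))); last by lin.
rewrite big_allpairs_dep /=; apply: eq_bigr => r _.
rewrite (pr_mull hpr); apply: eq_bigr => t _.
by rewrite !pr_act.
Qed.

Ltac lhs_of G := lazymatch G with
  | @eq _ ?l _ => l
  | Under_rel.Under_rel _ _ ?l _ => l end.

Ltac onlhs tac := lazymatch goal with
  | |- @eq _ _ ?R => let r := fresh "rhs" in set r := R; tac; subst r
  | _ => tac end.

Ltac exch_l := onlhs ltac:(rewrite exchange_big).

Ltac bring r :=
  lazymatch goal with |- ?G =>
  let l := lhs_of G in
  lazymatch l with
  | \big[_/_]_(i <- r) _ => idtac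
  | \big[_/_]_(i <- _) _ =>
      onlhs ltac:(under eq_bigr => ? _ do (bring r));
      exch_l
  end end.

Ltac deep tac := onlhs ltac:(under eq_bigr => ? _ do (first [progress tac | deep tac])).

Ltac coas hop D x :=
  bring (cop D x);
  under eq_bigr => ? _ do (match goal with v : _ * _ |- _ => bring (cop D v.2) end);
  rewrite (coasE hop) /=; [ | by move=> [? ?] [? ?] | by lin ].

Ltac msum :=
  lazymatch goal with
  | |- _ = \big[_/_]_(i <- ?r) _ => bring r; apply: eq_bigr => ? _; msum
  | _ => idtac
  end.

Lemma G2sum (G : H1 * H2 -> K) u I (s : seq I) (F : I -> H2) :
  bilinform (fun c d => G (c, d)) ->
  G (u, \sum_(i <- s) F i) = \sum_(i <- s) G (u, F i).
Proof. by move=> [_ h2]; apply: (lf_sumE _ _ (h2 u)). Qed.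
Lemma G1sum (G : H1 * H2 -> K) v I (s : seq I) (F : I -> H1) :
  bilinform (fun c d => G (c, d)) ->
  G (\sum_(i <- s) F i, v) = \sum_(i <- s) G (F i, v).
Proof. by move=> [h1 _]; apply: (lf_sumE _ _ (h1 v)). Qed.

Lemma dcp_assoc (x y z : H1 * H2) (G : H1 * H2 -> K) : bilinform (fun c d => G (c, d)) ->
  \sum_(w <- M x y) \sum_(w' <- M w z) G w' = \sum_(v <- M y z) \sum_(w' <- M x v) G w'.
Proof.
move=> hG; case: x => h a; case: y => g b; case: z => k c.
rewrite bigM /=.
under eq_bigr => p _ do under eq_bigr => s _ do rewrite bigM /=.
under eq_bigr => p _.
  under eq_bigr => s _.
    rewrite (teq2P (cop_mul hopf2 _ _)
      (G := fun t => \sum_(s' <- cop D1 k) G (h * lt p.1 s.1 * lt t.1 s'.1, rt t.2 s'.2 * c)));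
      last by lin.
    rewrite big_allpairs_dep /=.
    rewrite (teq2P (rt_cop mp _ _)
      (G := fun t => \sum_(e <- cop D2 b) \sum_(s' <- cop D1 k)
           G (h * lt p.1 s.1 * lt (t.1 * e.1) s'.1, rt (t.2 * e.2) s'.2 * c)));
      last by lin.
    rewrite big_allpairs_dep /=.
    over.
  over.
rewrite /=.
deep ltac:(rewrite (lt_mul mp)).
deep ltac:(rewrite (mp_rt_mul mp) mulr_suml (G2sum _ _ _ hG)).
deep ltac:(rewrite mulr_suml (G2sum _ _ _ hG)).
deep ltac:(rewrite -(rt_mul mp)).
coas hopf2 D2 a. coas hopf1 D1 g. coas hopf2 D2 b. coas hopf1 D1 k.
symmetry; rewrite bigM /=.
deep ltac:(rewrite bigM /=).
under eq_bigr => e _.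
  under eq_bigr => s' _.
    under eq_bigr => p _.
      rewrite (teq2P (cop_mul hopf1 _ _)
       (G := fun t => G (h * lt p.1 t.1, rt p.2 t.2 * (rt e.2 s'.2 * c)))); last by lin.
      rewrite big_allpairs_dep /=.
      under eq_bigr => q _.
        rewrite (teq2P (lt_cop mp _ _)
         (G := fun t => G (h * lt p.1 (q.1 * t.1), rt p.2 (q.2 * t.2) * (rt e.2 s'.2 * c))));
          last by lin.
        rewrite big_allpairs_dep /=.
        over.
      over.
    over.
  over.
rewrite /=.
deep ltac:(rewrite (mp_lt_mul mp) mulr_sumr (G1sum _ _ _ hG)).
deep ltac:(rewrite mulr_sumr (G1sum _ _ _ hG)).
symmetry.
msum.
by rewrite !mulrA.
Qed.

Ltac mid hop D x :=
  bring (cop D x);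
  under eq_bigr => ? _ do (match goal with v : _ * _ |- _ => bring (cop D v.1) end);
  rewrite (coasE' hop) /=; [ | by move=> [? ?] [? ?] | by lin ];
  under eq_bigr => ? _ do (under eq_bigr => ? _ do
      (match goal with v : _ * _ |- _ => bring (cop D v.2) end));
  under eq_bigr => ? _ do (rewrite (coasE hop) /=; [ | by move=> [? ?] [? ?] | by lin ]).

Lemma cocommE a' g' (Phi : H2 * H1 -> K) : bilinform (fun x y => Phi (x, y)) ->
  \sum_(t <- cop D2 a') \sum_(t' <- cop D1 g') Phi (rt t.1 t'.1, lt t.2 t'.2) =
  \sum_(t <- cop D2 a') \sum_(t' <- cop D1 g') Phi (rt t.2 t'.2, lt t.1 t'.1).
Proof.
move=> hP.
have := teq2P (mp_cocomm mp a' g') hP.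
by rewrite !big_allpairs_dep.
Qed.

Lemma dcp_copM (y z : H1 * H2) (G : (H1 * H2) * (H1 * H2) -> K) : qlin G ->
  \sum_(v <- M y z) \sum_(q <- C v) G q =
  \sum_(q <- C y) \sum_(s <- C z) \sum_(v1 <- M q.1 s.1) \sum_(v2 <- M q.2 s.2) G (v1, v2).
Proof.
move=> hG; case: y => g b; case: z => k c.
rewrite bigM /=.
deep ltac:(rewrite bigC /=).
under eq_bigr => p _.
  under eq_bigr => q _.
    rewrite (teq2P (cop_mul hopf1 _ _)
      (G := fun t => \sum_(r' <- cop D2 (rt p.2 q.2 * c)) G ((t.1, r'.1), (t.2, r'.2))));
      last by lin.
    rewrite big_allpairs_dep /=.
    under eq_bigr => gg _.
      rewrite (teq2P (lt_cop mp _ _)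
        (G := fun t => \sum_(r' <- cop D2 (rt p.2 q.2 * c))
                 G ((gg.1 * t.1, r'.1), (gg.2 * t.2, r'.2)))); last by lin.
      rewrite big_allpairs_dep /=.
      under eq_bigr => u _.
        under eq_bigr => v _.
          rewrite (teq2P (cop_mul hopf2 _ _)
            (G := fun t => G ((gg.1 * lt u.1 v.1, t.1), (gg.2 * lt u.2 v.2, t.2))));
            last by lin.
          rewrite big_allpairs_dep /=.
          rewrite (teq2P (rt_cop mp _ _)
            (G := fun t => \sum_(cc <- cop D2 c)
              G ((gg.1 * lt u.1 v.1, t.1 * cc.1), (gg.2 * lt u.2 v.2, t.2 * cc.2))));
            last by lin.
          rewrite big_allpairs_dep /=.
          over.
        over.
      over.
    over.
  over.
rewrite /=.
mid hopf2 D2 b. mid hopf1 D1 k.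
symmetry.
rewrite bigC /=.
deep ltac:(rewrite bigC /=).
deep ltac:(rewrite bigM /=).
deep ltac:(rewrite bigM /=).
mid hopf2 D2 b. mid hopf1 D1 k.
under eq_bigr => i _.
  under eq_bigr => p _.
    bring (cop D2 b).
    under eq_bigr => i0 _.
      bring (cop D2 i0.2).
      under eq_bigr => i1 _.
        bring (cop D2 i1.1).
        under eq_bigr => i2 _.
          bring (cop D1 p.1).
          over.
        rewrite (cocommE _ _ (Phi := fun w => \sum_(i3 <- cop D1 g) \sum_(i4 <- cop D2 c)
            G ((i3.1 * lt i0.1 i.1, w.1 * i4.1), (i3.2 * w.2, rt i1.2 p.2 * i4.2))));
          last by lin.
        over.
      over.
    over.
  over.
rewrite /=.
by msum.
Qed.

Local Notation A1 := (A1_mul D1 D2 D1' lt rt pr ractp).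
Local Notation A2 := (A2_mul D1 D2 D1' lt pr beta ractp).
Local Notation AL := (A_mulL D1 D2 D1' lt rt pr ractp).

Lemma bigAL (V : zmodType) s t (F : H1 * H2 * H1' -> V) :
  \sum_(w <- AL s t) F w = \sum_(x <- s) \sum_(y <- t) \sum_(w <- A1 x y) F w.
Proof. by rewrite /A_mulL big_flatten /= big_allpairs_dep. Qed.

Lemma bigA1 (V : zmodType) X Y (F : H1 * H2 * H1' -> V) :
  \sum_(w <- A1 X Y) F w =
  \sum_(q <- C Y.1) \sum_(z <- M X.1 q.1) F (z.1, z.2, act X.2 q.2 * Y.2).
Proof.
rewrite /A1_mul big_flatten /= big_map; apply: eq_bigr => q _.
by rewrite big_map.
Qed.

Lemma f3sum (f : H1 -> H2 -> H1' -> K) u v I (s : seq I) F : trilinform f ->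
  f u v (\sum_(i <- s) F i) = \sum_(i <- s) f u v (F i).
Proof. by case=> _ _ h3; apply: (lf_sumE _ _ (h3 u v)). Qed.

Lemma A1_assoc X Y Z : teq3 (AL (A1 X Y) [:: Z]) (AL [:: X] (A1 Y Z)).
Proof.
move=> f hf; rewrite !bigAL big_seq1.
under eq_bigr => u _ do rewrite big_seq1.
case: X => [[h a] phi]; case: Y => [[g b] psi]; case: Z => [[k c] chi] /=.
rewrite bigA1 /=.
deep ltac:(rewrite bigA1 /=).
deep ltac:(rewrite -surjective_pairing).
symmetry.
rewrite bigA1 /=.
deep ltac:(rewrite bigA1 /=).
deep ltac:(rewrite -surjective_pairing).
under eq_bigr => r _.
  rewrite dcp_copM /=; last by lin.
  under eq_bigr => q _.
    under eq_bigr => s _.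
      under eq_bigr => v1 _ do rewrite exchange_big.
      rewrite -dcp_assoc; last by lin.
      over.
    over.
  over.
rewrite /=.
symmetry.
deep ltac:(rewrite act_mul mulr_suml (f3sum _ _ _ _ hf)).
deep ltac:(rewrite act_comp !mulr_suml (f3sum _ _ _ _ hf)).
rewrite bigC /=; repeat (deep ltac:(rewrite bigC /=)).
coas hopf1 D1 k. coas hopf2 D2 c.
symmetry.
rewrite bigC /=; repeat (deep ltac:(rewrite bigC /=)).
symmetry.
msum.
by rewrite mulrA.
Qed.

Lemma f1sum (f : H1 -> H2 -> H1' -> K) v th I (s : seq I) F : trilinform f ->
  f (\sum_(i <- s) F i) v th = \sum_(i <- s) f (F i) v th.
Proof. by case=> h1 _ _; apply: (lf_sumE _ _ (h1 v th)). Qed.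
Lemma f2sum (f : H1 -> H2 -> H1' -> K) u th I (s : seq I) F : trilinform f ->
  f u (\sum_(i <- s) F i) th = \sum_(i <- s) f u (F i) th.
Proof. by case=> _ h2 _; apply: (lf_sumE _ _ (h2 u th)). Qed.
Lemma f1Z (f : H1 -> H2 -> H1' -> K) c x v th : trilinform f ->
  f (c *: x) v th = c * f x v th.
Proof. by case=> h1 _ _; apply: (lfZ _ _ (h1 v th)). Qed.
Lemma f2Z (f : H1 -> H2 -> H1' -> K) c x u th : trilinform f ->
  f u (c *: x) th = c * f u x th.
Proof. by case=> _ h2 _; apply: (lfZ _ _ (h2 u th)). Qed.
Lemma f3Z (f : H1 -> H2 -> H1' -> K) c x u v : trilinform f ->
  f u v (c *: x) = c * f u v x.
Proof. by case=> _ _ h3; apply: (lfZ _ _ (h3 u v)). Qed.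

Lemma bigA2 (V : zmodType) X Y (F : H1 * H2 * H1' -> V) :
  \sum_(w <- A2 X Y) F w =
  \sum_(q <- bc_cop D2 D1' beta (X.1.2, X.2))
     \sum_(z <- bc_mul D2 ractp q.2 (Y.1.2, Y.2))
        F (X.1.1 * bc_act D1 lt pr q.1 Y.1.1, z.1, z.2).
Proof.
rewrite /A2_mul big_flatten /= big_map; apply: eq_bigr => q _.
by rewrite big_map.
Qed.

Lemma bigBC (V : zmodType) (X : H2 * H1') (F : (H2 * H1') * (H2 * H1') -> V) :
  \sum_(w <- bc_cop D2 D1' beta X) F w =
  \sum_(p <- cop D2 X.1) \sum_(q <- beta p.2) \sum_(r <- cop D1' X.2)
     F ((p.1, q.1 * r.1), (q.2, r.2)).
Proof.
rewrite /bc_cop big_flatten /= big_map; apply: eq_bigr => p _.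
rewrite big_flatten /= big_map; apply: eq_bigr => q _.
by rewrite big_map.
Qed.

Lemma bigBM (V : zmodType) (X Y : H2 * H1') (F : H2 * H1' -> V) :
  \sum_(w <- bc_mul D2 ractp X Y) F w =
  \sum_(p <- cop D2 Y.1) F (X.1 * p.1, ractp X.2 p.2 * Y.2).
Proof. by rewrite /bc_mul big_map. Qed.

Lemma A1A2 X Y : teq3 (A1 X Y) (A2 X Y).
Proof.
move=> f hf.
case: X => [[h a] phi]; case: Y => [[g b] psi] /=.
rewrite bigA1 bigA2 /= bigC /=.
deep ltac:(rewrite bigM /=).
symmetry.
rewrite bigBC /=.
deep ltac:(rewrite bigBM /=).
deep ltac:(rewrite /bc_act /= mulr_sumr (f1sum _ _ _ _ hf)).
deep ltac:(rewrite -scalerAr (f1Z _ _ _ _ hf) (pr_mull hpr) mulr_suml).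
coas hopf1 D1 g.
symmetry.
deep ltac:(rewrite hdual mulr_suml (f2sum _ _ _ _ hf)).
deep ltac:(rewrite -scalerAl (f2Z _ _ _ _ hf) /dcp_ract mulr_suml (f3sum _ _ _ _ hf) mulr_sumr).
deep ltac:(rewrite -scalerAl (f3Z _ _ _ _ hf)).
msum.
by rewrite /= mulrA.
Qed.

Lemma f1lin (f : H1 -> H2 -> H1' -> K) v th I (s : seq I) c x : trilinform f ->
  f (\sum_(i <- s) c i *: x i) v th = \sum_(i <- s) c i * f (x i) v th.
Proof. by move=> hf; rewrite (f1sum _ _ _ _ hf); apply: eq_bigr => i _; rewrite (f1Z _ _ _ _ hf). Qed.
Lemma f2lin (f : H1 -> H2 -> H1' -> K) u th I (s : seq I) c x : trilinform f ->
  f u (\sum_(i <- s) c i *: x i) th = \sum_(i <- s) c i * f u (x i) th.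
Proof. by move=> hf; rewrite (f2sum _ _ _ _ hf); apply: eq_bigr => i _; rewrite (f2Z _ _ _ _ hf). Qed.
Lemma f3lin (f : H1 -> H2 -> H1' -> K) u v I (s : seq I) c x : trilinform f ->
  f u v (\sum_(i <- s) c i *: x i) = \sum_(i <- s) c i * f u v (x i).
Proof. by move=> hf; rewrite (f3sum _ _ _ _ hf); apply: eq_bigr => i _; rewrite (f3Z _ _ _ _ hf). Qed.

Lemma act_one (x : H1 * H2) : act 1 x = (cou D1 x.1 * cou D2 x.2) *: 1.
Proof.
apply: sep => g; rewrite pr_act prZ1 !(pr_onel hpr) (cou_mul hopf1) (lt_cou mp).
by rewrite !mulrA.
Qed.

Lemma act_unit phi : act phi (1, 1) = phi.
Proof. by apply: sep => g; rewrite pr_act /= (lt_one mp) mul1r. Qed.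

Lemma copone1 (G : H1 * H1 -> K) : bilinform (fun a b => G (a, b)) ->
  \sum_(p <- cop D1 1) G p = G (1, 1).
Proof. by move=> hG; rewrite (teq2P (cop_one hopf1) hG) big_seq1. Qed.
Lemma copone2 (G : H2 * H2 -> K) : bilinform (fun a b => G (a, b)) ->
  \sum_(p <- cop D2 1) G p = G (1, 1).
Proof. by move=> hG; rewrite (teq2P (cop_one hopf2) hG) big_seq1. Qed.

Lemma f1cou (f : H1 -> H2 -> H1' -> K) (hf : trilinform f) x v th :
  f x v th = \sum_(p <- cop D1 x) cou D1 p.2 * f p.1 v th.
Proof. by rewrite -(f1lin _ _ _ _ _ hf) counitrE. Qed.
Lemma f1cou' (f : H1 -> H2 -> H1' -> K) (hf : trilinform f) x v th :
  f x v th = \sum_(p <- cop D1 x) cou D1 p.1 * f p.2 v th.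
Proof. by rewrite -(f1lin _ _ _ _ _ hf) counitlE. Qed.
Lemma f2cou (f : H1 -> H2 -> H1' -> K) (hf : trilinform f) x u th :
  f u x th = \sum_(p <- cop D2 x) cou D2 p.2 * f u p.1 th.
Proof. by rewrite -(f2lin _ _ _ _ _ hf) counitrE. Qed.
Lemma f2cou' (f : H1 -> H2 -> H1' -> K) (hf : trilinform f) x u th :
  f u x th = \sum_(p <- cop D2 x) cou D2 p.1 * f u p.2 th.
Proof. by rewrite -(f2lin _ _ _ _ _ hf) counitlE. Qed.
Lemma f3cou (f : H1 -> H2 -> H1' -> K) (hf : trilinform f) x u v :
  f u v x = \sum_(p <- cop D1' x) cou D1' p.2 * f u v p.1.
Proof. by rewrite -(f3lin _ _ _ _ _ hf) counitrE. Qed.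

Lemma A1_unitl X : teq3 (A1 (1, 1, 1) X) [:: X].
Proof.
move=> f hf; case: X => [[g b] psi] /=; rewrite big_seq1 bigA1 /= bigC /=.
deep ltac:(rewrite bigM /=).
deep ltac:(rewrite copone2 /=; last by lin).
deep ltac:(rewrite mul1r (lt_one mp) (mp_rt_one mp) act_one /= -!scalerAl !mul1r
   (f2Z _ _ _ _ hf) (f3Z _ _ _ _ hf)).
symmetry.
rewrite (f1cou hf g).
under [X in X = _]eq_bigr => i _ do rewrite (f1cou hf i.1) mulr_sumr.
deep ltac:(rewrite (f2cou hf b) mulr_sumr).
deep ltac:(rewrite mulr_sumr).
msum.
ring.
Qed.

Lemma A1_unitr X : teq3 (A1 X (1, 1, 1)) [:: X].
Proof.
move=> f hf; case: X => [[h a] phi] /=; rewrite big_seq1 bigA1 /= bigC /=.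
rewrite copone1 /=; last by lin.
rewrite copone2 /=; last by lin.
rewrite bigM /=.
deep ltac:(rewrite copone1 /=; last by lin).
deep ltac:(rewrite (mp_lt_one mp) (rt_one mp) act_unit !mulr1 -scalerAr mulr1 (f1Z _ _ _ _ hf)).
by rewrite (f2cou' hf a).
Qed.

Local Notation i_dcp := (@iota_dcp K H1 H2 H1').
Local Notation i_bc := (@iota_bc K H1 H2 H1').
Local Notation i_hw := (@iota_hw K H1 H2 H1').

Lemma inj_dcp (s t : seq (H1 * H2)) : teq3 (map i_dcp s) (map i_dcp t) -> teq2 s t.
Proof.
move=> H f hf.
have e r : \sum_(p <- r) f p.1 p.2 = \sum_(p <- r) f p.1 p.2 * cou D1' 1.
  by apply: eq_bigr => p _; rewrite (cou_one hopf1') mulr1.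
rewrite !e; have := H (fun u v th => f u v * cou D1' th); rewrite !big_map /=.
by apply; lin.
Qed.

Lemma inj_bc (s t : seq (H2 * H1')) : teq3 (map i_bc s) (map i_bc t) -> teq2 s t.
Proof.
move=> H f hf.
have e r : \sum_(p <- r) f p.1 p.2 = \sum_(p <- r) cou D1 1 * f p.1 p.2.
  by apply: eq_bigr => p _; rewrite (cou_one hopf1) mul1r.
rewrite !e; have := H (fun u v th => cou D1 u * f v th); rewrite !big_map /=.
by apply; lin.
Qed.

Lemma inj_hw (s t : seq (H1 * H1')) : teq3 (map i_hw s) (map i_hw t) -> teq2 s t.
Proof.
move=> H f hf.
have e r : \sum_(p <- r) f p.1 p.2 = \sum_(p <- r) f p.1 p.2 * cou D2 1.
  by apply: eq_bigr => p _; rewrite (cou_one hopf2) mulr1.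
rewrite !e; have := H (fun u v th => f u th * cou D2 v); rewrite !big_map /=.
by apply; lin.
Qed.

Lemma rt_cou a x : rt a x = \sum_(t <- cop D1 x) cou D1 t.2 *: rt a t.1.
Proof.
rewrite -{1}(counitrE hopf1 x) (lm_sumE _ _ (lm_rt2 a (@lm_id _ _))).
by apply: eq_bigr => t _; rewrite (lmZ _ _ (lm_rt2 a (@lm_id _ _))).
Qed.

Lemma mul_cou2 (w x : H2) : w * x = \sum_(t <- cop D2 x) cou D2 t.2 *: (w * t.1).
Proof.
rewrite -{1}(counitrE hopf2 x) mulr_sumr; apply: eq_bigr => t _.
by rewrite scalerAr.
Qed.

Lemma sub_dcp x y : teq3 (A1 (i_dcp x) (i_dcp y)) (map i_dcp (M x y)).
Proof.
move=> f hf; case: x => h a; case: y => g b.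
rewrite bigA1 /= big_map /= bigC /=.
deep ltac:(rewrite act_one mulr1 (f3Z _ _ _ _ hf)).
deep ltac:(rewrite bigM /=).
symmetry.
rewrite bigM /=.
deep ltac:(rewrite rt_cou mulr_suml (f2sum _ _ _ _ hf)).
deep ltac:(rewrite -scalerAl (f2Z _ _ _ _ hf)).
coas hopf1 D1 g.
deep ltac:(rewrite mul_cou2 (f2sum _ _ _ _ hf) mulr_sumr).
deep ltac:(rewrite (f2Z _ _ _ _ hf)).
msum.
by rewrite mulrA.
Qed.

Lemma mul_coul2 (x w : H2) : x * w = \sum_(t <- cop D2 x) cou D2 t.1 *: (t.2 * w).
Proof.
rewrite -{1}(counitlE hopf2 x) mulr_suml; apply: eq_bigr => t _.
by rewrite scalerAl.
Qed.

Lemma act_r phi (b : H2) : act phi (1, b) = ractp phi b.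
Proof. by apply: sep => g; rewrite pr_act /= mul1r hractp. Qed.

Lemma sub_bc X Y : teq3 (A1 (i_bc X) (i_bc Y)) (map i_bc (bc_mul D2 ractp X Y)).
Proof.
move=> f hf; case: X => a phi; case: Y => b psi.
rewrite bigA1 /= big_map /= bigC /=.
rewrite copone1 /=; last by lin.
deep ltac:(rewrite bigM /=).
deep ltac:(rewrite copone1 /=; last by lin).
deep ltac:(rewrite (mp_lt_one mp) (rt_one mp) act_r mul1r (f1Z _ _ _ _ hf)).
symmetry.
rewrite bigBM /=.
deep ltac:(rewrite mul_coul2 (f2sum _ _ _ _ hf)).
deep ltac:(rewrite (f2Z _ _ _ _ hf)).
by msum.
Qed.

Lemma f1cou_l (f : H1 -> H2 -> H1' -> K) (hf : trilinform f) (h x : H1) v th :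
  f (h * x) v th = \sum_(p <- cop D1 x) cou D1 p.2 * f (h * p.1) v th.
Proof.
rewrite -{1}(counitrE hopf1 x) mulr_sumr (f1sum _ _ _ _ hf); apply: eq_bigr => p _.
by rewrite -scalerAr (f1Z _ _ _ _ hf).
Qed.

Lemma ractp_one phi : ractp phi 1 = phi.
Proof. by apply: sep => g; rewrite hractp (lt_one mp). Qed.

Lemma sub_hw x y : teq3 (A1 (i_hw x) (i_hw y)) (map i_hw (hw_mul D1 D1' pr x y)).
Proof.
move=> f hf; case: x => h phi; case: y => g psi.
rewrite bigA1 /= big_map /= bigC /=.
deep ltac:(rewrite copone2 /=; last by lin).
deep ltac:(rewrite bigM /=).
deep ltac:(rewrite copone2 /=; last by lin).
deep ltac:(rewrite (lt_one mp) (mp_rt_one mp) mulr1 (f2Z _ _ _ _ hf)).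
deep ltac:(rewrite /dcp_ract /= mulr_suml (f3sum _ _ _ _ hf) mulr_sumr).
deep ltac:(rewrite ractp_one -scalerAl (f3Z _ _ _ _ hf)).
symmetry.
rewrite /hw_mul big_allpairs_dep /=.
deep ltac:(rewrite (f3Z _ _ _ _ hf) (f1cou_l hf) mulr_sumr).
msum.
by rewrite mulrCA.
Qed.

Lemma main_sec :
  (forall X Y, teq3 (A1 X Y) (A2 X Y)) /\
  (forall X Y Z, teq3 (AL (A1 X Y) [:: Z]) (AL [:: X] (A1 Y Z))) /\
  (forall X, teq3 (A1 (1, 1, 1) X) [:: X] /\ teq3 (A1 X (1, 1, 1)) [:: X]) /\
  (forall x y, teq3 (A1 (i_dcp x) (i_dcp y)) (map i_dcp (M x y))) /\
  (forall s t : seq (H1 * H2), teq3 (map i_dcp s) (map i_dcp t) -> teq2 s t) /\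
  (forall X Y, teq3 (A1 (i_bc X) (i_bc Y)) (map i_bc (bc_mul D2 ractp X Y))) /\
  (forall s t : seq (H2 * H1'), teq3 (map i_bc s) (map i_bc t) -> teq2 s t) /\
  (forall x y, teq3 (A1 (i_hw x) (i_hw y)) (map i_hw (hw_mul D1 D1' pr x y))) /\
  (forall s t : seq (H1 * H1'), teq3 (map i_hw s) (map i_hw t) -> teq2 s t).
Proof.
split; first exact: A1A2.
split; first exact: A1_assoc.
split; first by move=> X; split; [exact: A1_unitl | exact: A1_unitr].
split; first exact: sub_dcp.
split; first exact: inj_dcp.
split; first exact: sub_bc.
split; first exact: inj_bc.
split; first exact: sub_hw.
exact: inj_hw.
Qed.
End Main.

Theorem mainTheorem1 (R : realType)
  (H1 H2 H1' : algType R[i])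
  (D1 : hopf_data R[i] H1) (D2 : hopf_data R[i] H2) (D1' : hopf_data R[i] H1')
  (hopf1 : is_hopf D1) (hopf2 : is_hopf D2) (hopf1' : is_hopf D1')
  (lt : H2 -> H1 -> H1) (rt : H2 -> H1 -> H2)
  (mp : matched_pair D1 D2 lt rt)
  (pr : H1' -> H1 -> R[i])
  (hpr : hopf_pairing D1 D1' pr) (ndeg : nondeg_pairing pr)
  (beta : H2 -> seq (H1' * H2))
  (hbeta : left_coaction D1' beta)
  (hdual : forall a h, rt a h = \sum_(p <- beta a) pr p.1 h *: p.2)
  (ractp : H1' -> H2 -> H1')
  (hractp : forall phi a h, pr (ractp phi a) h = pr phi (lt a h)) :
  let A1 := A1_mul D1 D2 D1' lt rt pr ractp in
  let A2 := A2_mul D1 D2 D1' lt pr beta ractp in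
  let AL := A_mulL D1 D2 D1' lt rt pr ractp in
  let i_dcp := @iota_dcp _ H1 H2 H1' in
  let i_bc := @iota_bc _ H1 H2 H1' in
  let i_hw := @iota_hw _ H1 H2 H1' in
  (* the products of A1 and A2 coincide *)
  (forall X Y, teq3 (A1 X Y) (A2 X Y)) /\
  (* A is an associative unital algebra *)
  (forall X Y Z, teq3 (AL (A1 X Y) [:: Z]) (AL [:: X] (A1 Y Z))) /\
  (forall X, teq3 (A1 (1, 1, 1) X) [:: X] /\ teq3 (A1 X (1, 1, 1)) [:: X]) /\
  (* H1 >< H2 is a subalgebra via h (x) a |-> h (x) a (x) 1 *)
  (forall x y, teq3 (A1 (i_dcp x) (i_dcp y))
                    (map i_dcp (dcp_mul D1 D2 lt rt x y))) /\
  (forall s t : seq (H1 * H2),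
     teq3 (map i_dcp s) (map i_dcp t) -> teq2 s t) /\
  (* H2 |><| H1' is a subalgebra via a (x) phi |-> 1 (x) a (x) phi *)
  (forall X Y, teq3 (A1 (i_bc X) (i_bc Y))
                    (map i_bc (bc_mul D2 ractp X Y))) /\
  (forall s t : seq (H2 * H1'),
     teq3 (map i_bc s) (map i_bc t) -> teq2 s t) /\
  (* the Heisenberg-Weyl algebra H1 >< H1' is a subalgebra via
     h (x) phi |-> h (x) 1 (x) phi *)
  (forall x y, teq3 (A1 (i_hw x) (i_hw y))
                    (map (i_hw) (hw_mul D1 D1' pr x y))) /\
  (forall s t : seq (H1 * H1'),
     teq3 (map (i_hw) s) (map (i_hw) t) -> teq2 s t).
Proof. exact: (main_sec hopf1 hopf2 hopf1' mp hpr ndeg hdual hractp). Qed.
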